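(* The Baxter monoid $\mathrm{baxt}_\infty$ satisfies the identities $$ysxt\,xy\,hxky \approx ysxt\,yx\,hxky \quad\text{and}\quad xsyt\,xy\,hxky \approx xsyt\,yx\,hxky.$$
   Context: Let $\mathcal{A}=\{1<2<3<\cdots\}$. Right strict binary search tree: labelled rooted binary tree in which each node's label is $\ge$ every label in its left subtree and $<$ every label in its right subtree; inserting $a$: if empty create node $a$, else with root label $x$ insert into right subtree if $a>x$, left subtree otherwise. $\mathrm{P}_{\mathrm{sylv}}(w_1\cdots w_k)$ is obtained from the empty tree by inserting $w_k,\dots,w_1$ in this order. Left strict binary search tree: each node's label is $>$ every label in its left subtree and $\le$ every label in its right subtree; inserting $a$: if empty create node $a$, else with root label $x$ insert into left subtree if $a<x$, right subtree otherwise. $\mathrm{P}^\sharp(w_1\cdots w_k)$ is obtained from the empty tree by inserting $w_1,\dots,w_k$ in this order. Set $\mathrm{P}_{\mathrm{baxt}}(w)=(\mathrm{P}^\sharp(w),\mathrm{P}_{\mathrm{sylv}}(w))$. The Baxter monoid $\mathrm{baxt}_\infty$ is $\mathcal{A}^*/{\equiv}$ with $u\equiv v\iff\mathrm{P}_{\mathrm{baxt}}(u)=\mathrm{P}_{\mathrm{baxt}}(v)$. A monoid $S$ satisfies an identity $\mathbf{u}\approx\mathbf{v}$ between words over an alphabet of letters if $\varphi(\mathbf{u})=\varphi(\mathbf{v})$ for every assignment $\varphi$ of elements of $S$ (including the identity element) to the letters. *)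

(* Defs.v *)
From mathcomp Require Import all_boot.
Set Implicit Arguments. Unset Strict Implicit. Unset Printing Implicit Defensive.

(* Alphabet A = {1 < 2 < 3 < ...}: letters are nat's >= 1; words are seq nat
   whose letters are all positive. *)
Definition is_word (w : seq nat) : bool := all (fun a => 0 < a) w.

Inductive tree : Type := Leaf | Node of tree & nat & tree.

Fixpoint ins_right (a : nat) (T : tree) : tree :=
  match T with
  | Leaf => Node Leaf a Leaf
  | Node l x r => if x < a then Node l x (ins_right a r) else Node (ins_right a l) x r
  end.

Fixpoint ins_left (a : nat) (T : tree) : tree :=
  match T with
  | Leaf => Node Leaf a Leaf
  | Node l x r => if a < x then Node (ins_left a l) x r else Node l x (ins_left a r)
  end.

Definition P_sylv (w : seq nat) : tree := foldr ins_right Leaf w.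

Definition P_sharp (w : seq nat) : tree := foldl (fun T a => ins_left a T) Leaf w.

Definition P_baxt (w : seq nat) : tree * tree := (P_sharp w, P_sylv w).

(* The Baxter congruence: baxt_oo = A^* / baxt_equiv. *)
Definition baxt_equiv (u v : seq nat) : Prop := P_baxt u = P_baxt v.

Inductive var : Type := vx | vy | vs | vt | vh | vk.

(* Image of a word over the variables under an assignment phi of elements of
   baxt_oo (represented by words over A; the identity element is the empty
   word) to the variables: the product phi(u_1)...phi(u_n), represented by the
   concatenation of representatives. *)
Definition subst (phi : var -> seq nat) (u : seq var) : seq nat :=
  flatten (map phi u).

Definition baxt_satisfies (u v : seq var) : Prop :=
  forall phi : var -> seq nat, (forall z, is_word (phi z)) ->
    baxt_equiv (subst phi u) (subst phi v).

(* Main.v *)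
Require Import Defs.
From mathcomp Require Import all_boot.
From mathcomp Require Import zify.
Set Implicit Arguments.

Fixpoint tmem (y : nat) (T : tree) : bool :=
  match T with Leaf => false | Node l x r => [|| y == x, tmem y l | tmem y r] end.
Fixpoint tall (p : nat -> bool) (T : tree) : bool :=
  match T with Leaf => true | Node l x r => [&& p x, tall p l & tall p r] end.
Fixpoint bstR (T : tree) : bool :=
  match T with Leaf => true
  | Node l x r => [&& tall (fun y => y <= x) l, tall (fun y => x < y) r, bstR l & bstR r] end.
Fixpoint bstL (T : tree) : bool :=
  match T with Leaf => true
  | Node l x r => [&& tall (fun y => y < x) l, tall (fun y => x <= y) r, bstL l & bstL r] end.

Lemma tallP (p : nat -> bool) T y : tall p T -> tmem y T -> p y.
Proof.
elim: T => [|l IHl x r IHr] //= /and3P[px pl pr] /or3P[/eqP->|/IHl|/IHr]; auto.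
Qed.

Arguments tallP {p T y}.

Lemma tall_insR (p : nat -> bool) a T : p a -> tall p T -> tall p (ins_right a T).
Proof.
move=> pa; elim: T => [|l IHl x r IHr] /=; first by rewrite pa.
by case/and3P=> px pl pr; case: ifP => _ /=; rewrite px ?IHl ?IHr ?pl ?pr.
Qed.

Lemma tall_insL (p : nat -> bool) a T : p a -> tall p T -> tall p (ins_left a T).
Proof.
move=> pa; elim: T => [|l IHl x r IHr] /=; first by rewrite pa.
by case/and3P=> px pl pr; case: ifP => _ /=; rewrite px ?IHl ?IHr ?pl ?pr.
Qed.

Lemma insR_inv a T : bstR T -> bstR (ins_right a T).
Proof.
elim: T => [|l IHl x r IHr] //= /and4P[hl hr bl br].
case: ifP => h /=.
  by rewrite hl bl IHr // tall_insR.
by rewrite hr br IHl // tall_insR // leqNgt h.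
Qed.

Lemma insL_inv a T : bstL T -> bstL (ins_left a T).
Proof.
elim: T => [|l IHl x r IHr] //= /and4P[hl hr bl br].
case: ifP => h /=.
  by rewrite hr br IHl // tall_insL.
by rewrite hl bl IHr // tall_insL // leqNgt h.
Qed.

Lemma insR_mem a y T : tmem y T -> tmem y (ins_right a T).
Proof.
elim: T => [|l IHl x r IHr] //=.
by case: ifP => _ /= /or3P[->|h|h]; rewrite ?orbT //; first [by rewrite h ?orbT | by rewrite IHl ?orbT | by rewrite IHr ?orbT].
Qed.

Lemma insL_mem a y T : tmem y T -> tmem y (ins_left a T).
Proof.
elim: T => [|l IHl x r IHr] //=.
by case: ifP => _ /= /or3P[->|h|h]; rewrite ?orbT //; first [by rewrite h ?orbT | by rewrite IHl ?orbT | by rewrite IHr ?orbT].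
Qed.

Lemma insR_self a T : tmem a (ins_right a T).
Proof.
elim: T => [|l IHl x r IHr] /=; first by rewrite eqxx.
by case: ifP => _ /=; rewrite ?IHl ?IHr ?orbT.
Qed.

Lemma insL_self a T : tmem a (ins_left a T).
Proof.
elim: T => [|l IHl x r IHr] /=; first by rewrite eqxx.
by case: ifP => _ /=; rewrite ?IHl ?IHr ?orbT.
Qed.

Lemma commR0 T : bstR T -> forall a c y, tmem y T -> c <= y -> y < a ->
  ins_right a (ins_right c T) = ins_right c (ins_right a T).
Proof.
elim: T => [|l IHl x r IHr] //= /and4P[hl hr bl br] a c y hy hcy hya.
have [xc|cx] := ltnP x c.
  have xa : x < a by lia.
  rewrite /= ?xc ?xa /= ?xc ?xa /= ?xc ?xa; congr (Node l x _); apply: (IHr br a c y) => //.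
  case/or3P: hy => [/eqP|/(tallP hl)|//]; lia.
have cx' : (x < c) = false by lia.
have [xa|ax] := ltnP x a.
  by rewrite /= ?xa ?cx' /= ?xa ?cx' /= ?xa ?cx'.
have ax' : (x < a) = false by lia.
rewrite /= ?ax' ?cx' /= ?ax' ?cx' /= ?ax' ?cx'; congr (Node _ x r).
apply: (IHl bl a c y) => //.
case/or3P: hy => [/eqP|//|/(tallP hr)]; lia.
Qed.

Lemma commR a c T : bstR T -> tmem a T -> tmem c T ->
  ins_right a (ins_right c T) = ins_right c (ins_right a T).
Proof.
move=> b ha hc; have [ac|ca|->] := ltngtP a c.
  by symmetry; apply: (commR0 _ b c a a ha).
by apply: (commR0 _ b a c c hc).
by [].
Qed.

Lemma commL0 T : bstL T -> forall a c y, tmem y T -> a < y -> y <= c ->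
  ins_left a (ins_left c T) = ins_left c (ins_left a T).
Proof.
elim: T => [|l IHl x r IHr] //= /and4P[hl hr bl br] a c y hy hay hyc.
have [cx|xc] := ltnP c x.
  have ax : a < x by lia.
  rewrite /= ?cx ?ax /= ?cx ?ax /= ?cx ?ax; congr (Node _ x r); apply: (IHl bl a c y) => //.
  case/or3P: hy => [/eqP|//|/(tallP hr)]; lia.
have cx' : (c < x) = false by lia.
have [ax|xa] := ltnP a x.
  by rewrite /= ?ax ?cx' /= ?ax ?cx' /= ?ax ?cx'.
have ax' : (a < x) = false by lia.
rewrite /= ?ax' ?cx' /= ?ax' ?cx' /= ?ax' ?cx'; congr (Node l x _).
apply: (IHr br a c y) => //.
case/or3P: hy => [/eqP|/(tallP hl)|//]; lia.
Qed.

Lemma commL a c T : bstL T -> tmem a T -> tmem c T ->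
  ins_left a (ins_left c T) = ins_left c (ins_left a T).
Proof.
move=> b ha hc; have [ac|ca|->] := ltngtP a c.
  by apply: (commL0 _ b a c c hc).
by symmetry; apply: (commL0 _ b c a a ha).
by [].
Qed.

Section Gen.
Variable ins : nat -> tree -> tree.
Variable inv : tree -> bool.
Hypothesis ins_inv : forall a T, inv T -> inv (ins a T).
Hypothesis ins_mem : forall a y T, tmem y T -> tmem y (ins a T).
Hypothesis ins_self : forall a T, tmem a (ins a T).
Hypothesis ins_comm : forall a c T, inv T -> tmem a T -> tmem c T ->
  ins a (ins c T) = ins c (ins a T).

Lemma fold_inv p T : inv T -> inv (foldr ins T p).
Proof. by move=> h; elim: p => //= b p IH; apply: ins_inv. Qed.

Lemma fold_mem p T y : tmem y T -> tmem y (foldr ins T p).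
Proof. by move=> h; elim: p => //= b p IH; apply: ins_mem. Qed.

Lemma fold_in p T y : y \in p -> tmem y (foldr ins T p).
Proof.
elim: p => //= b p IH; rewrite in_cons => /orP[/eqP->|/IH]; first exact: ins_self.
exact: ins_mem.
Qed.

Lemma fold_M Y Z a T : inv T -> tmem a T -> all (tmem^~ T) Y ->
  foldr ins T (Y ++ a :: Z) = ins a (foldr ins T (Y ++ Z)).
Proof.
move=> iT aT; elim: Y => //= b Y IH /andP[bT YT].
rewrite IH // ins_comm //; first exact: fold_inv.
 exact: fold_mem. exact: fold_mem.
Qed.

Lemma fold_swap X Y T : inv T -> all (tmem^~ T) X -> all (tmem^~ T) Y ->
  foldr ins T (X ++ Y) = foldr ins T (Y ++ X).
Proof.
move=> iT; elim: X => /= [|a X IH]; first by rewrite cats0.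
by case/andP=> aT XT YT; rewrite IH // fold_M.
Qed.
End Gen.

Lemma baxt_swap P X Y Q :
  {subset X <= P} -> {subset Y <= P} -> {subset X <= Q} -> {subset Y <= Q} ->
  baxt_equiv (P ++ X ++ Y ++ Q) (P ++ Y ++ X ++ Q).
Proof.
move=> XP YP XQ YQ; rewrite /baxt_equiv /P_baxt /P_sharp /P_sylv; congr pair.
  have split s : foldl (fun T a => ins_left a T) Leaf (P ++ s ++ Q) =
     foldl (fun T a => ins_left a T) (foldl (fun T a => ins_left a T)
        (foldl (fun T a => ins_left a T) Leaf P) s) Q by rewrite !foldl_cat.
  rewrite (catA X) (catA Y) !split; congr foldl.
  rewrite -(revK (X ++ Y)) -(revK (Y ++ X)) !foldl_rev !rev_cat.
  set T := foldl _ Leaf P.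
  have hT : bstL T.
    rewrite /T -(revK P) foldl_rev; exact: (@fold_inv ins_left bstL insL_inv (rev P) Leaf).
  have mT z : z \in P -> tmem z T.
    by move=> zP; rewrite /T -(revK P) foldl_rev; apply: (@fold_in ins_left insL_mem insL_self); rewrite mem_rev.
  apply: (@fold_swap ins_left bstL insL_inv insL_mem commL) => //; apply/allP => z; rewrite mem_rev => ?; auto.
have split s : foldr ins_right Leaf (P ++ s ++ Q) =
   foldr ins_right (foldr ins_right (foldr ins_right Leaf Q) s) P by rewrite !foldr_cat.
rewrite (catA X) (catA Y) !split; congr foldr.
have hT : bstR (foldr ins_right Leaf Q) := @fold_inv ins_right bstR insR_inv Q Leaf erefl.
apply: (@fold_swap ins_right bstR insR_inv insR_mem commR) => //; apply/allP => z ?;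
  apply: (@fold_in ins_right insR_mem insR_self); auto.
Qed.

Theorem theorem4p9 :
  baxt_satisfies [:: vy; vs; vx; vt; vx; vy; vh; vx; vk; vy]
                 [:: vy; vs; vx; vt; vy; vx; vh; vx; vk; vy] /\
  baxt_satisfies [:: vx; vs; vy; vt; vx; vy; vh; vx; vk; vy]
                 [:: vx; vs; vy; vt; vy; vx; vh; vx; vk; vy].
Proof.
split=> phi _; rewrite /subst /=.
  have := @baxt_swap (phi vy ++ phi vs ++ phi vx ++ phi vt) (phi vx) (phi vy)
    (phi vh ++ phi vx ++ phi vk ++ phi vy ++ [::]).
  rewrite -!catA; apply=> z; rewrite !mem_cat => ->; by rewrite ?orbT.
have := @baxt_swap (phi vx ++ phi vs ++ phi vy ++ phi vt) (phi vx) (phi vy)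
  (phi vh ++ phi vx ++ phi vk ++ phi vy ++ [::]).
rewrite -!catA; apply=> z; rewrite !mem_cat => ->; by rewrite ?orbT.
Qed.
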